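(* Let $\Lambda$ be a net of quadrics in $\mathbb{P}^5$. For each $i\in\{1,\dots,5\}$, $\Lambda$ fails to be stable with respect to some one-parameter subgroup of numerical type $\rho_i$ if and only if there is a complete flag $F_0\subset F_1\subset F_2\subset F_3\subset F_4\subset\mathbb{P}^5$ of linear subspaces ($\dim F_j=j$) such that the corresponding condition holds: (1) $\rho_1=(1,1,1,1,1,-5)$: some element of $\Lambda$ contains $F_4$. (2) $\rho_2=(1,1,1,1,-2,-2)$: (a) some pencil in $\Lambda$ contains $F_3$, or (b) some element of $\Lambda$ is singular along $F_3$. (3) $\rho_3=(1,1,1,-1,-1,-1)$: (a) $\Lambda$ contains $F_2$, or (b) some pencil in $\Lambda$ contains $F_2$ and an element of that pencil is singular along $F_2$. (4) $\rho_4=(2,2,-1,-1,-1,-1)$: (a) $\Lambda$ contains $F_1$ and some element of $\Lambda$ is singular along $F_1$, or (b) some pencil in $\Lambda$ is singular along $F_1$. (5) $\rho_5=(5,-1,-1,-1,-1,-1)$: $\Lambda$ contains $F_0$ and some pencil in $\Lambda$ is singular at $F_0$.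
   Context: A net of quadrics in $\mathbb{P}^5$ is a $3$-dimensional subspace $\Lambda$ of the space $W$ of quadratic forms on $\mathbb{C}^6$, viewed in $Gr(3,W)\subset\mathbb{P}(\bigwedge^3W)$ with $SL(6)$-action. A 1-PS of numerical type $(a_0,\dots,a_5)$ acts diagonally on some basis $x_0,\dots,x_5$ of linear forms with these weights; the weight of $x_ix_j$ is $a_i+a_j$, that of a Plücker coordinate $x_{i_1}x_{j_1}\wedge x_{i_2}x_{j_2}\wedge x_{i_3}x_{j_3}$ is the sum of monomial weights; $\Lambda$ is stable w.r.t. $\rho$ if some Plücker coordinate not vanishing on $\Lambda$ has positive $\rho$-weight. A pencil in $\Lambda$ is a $2$-dimensional subspace; ''a pencil (resp. $\Lambda$) contains/is singular along $F$'' means every quadric in it contains $F$ / is singular along $F$. (The flag corresponds to a basis via $F_j=\{x_{j+1}=\dots=x_5=0\}$.) *)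

(* Defs.v *)
From HB Require Import structures.
From mathcomp Require Import all_boot all_order all_algebra.
From mathcomp Require Import reals complex.
Set Implicit Arguments. Unset Strict Implicit. Unset Printing Implicit Defensive.
Import Order.TTheory GRing.Theory Num.Theory.
Local Open Scope ring_scope.

(* A net of
   quadrics is a 3-dimensional subspace of the space W of symmetric matrices
   (= quadratic forms, char 0).  A projective linear subspace of P^5 of
   dimension j is a vector subspace of dimension j+1. *)

Section Defs.
Variable F : fieldType.
Local Notation mat := 'M[F]_6.
Local Notation vec := 'cV[F]_6.

Definition qform (A : mat) (v : vec) : F := (v^T *m A *m v) 0 0.

Definition is_net (L : {vspace mat}) : Prop :=
  \dim L = 3%N /\ (forall A, A \in L -> A^T = A).

Definition is_pencil_in (P L : {vspace mat}) : Prop :=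
  \dim P = 2%N /\ (P <= L)%VS.

Definition quad_contains (A : mat) (V : {vspace vec}) : Prop :=
  forall v, v \in V -> qform A v = 0.

(* the quadric q_A is singular along V : the gradient (A + A^T) v of q_A
   vanishes at every point v of V *)
Definition quad_singular_along (A : mat) (V : {vspace vec}) : Prop :=
  forall v, v \in V -> (A + A^T) *m v = 0.

Definition sys_contains (S : {vspace mat}) (V : {vspace vec}) : Prop :=
  forall A, A \in S -> quad_contains A V.
Definition sys_singular_along (S : {vspace mat}) (V : {vspace vec}) : Prop :=
  forall A, A \in S -> quad_singular_along A V.

Definition complete_flag (Fl : nat -> {vspace vec}) : Prop :=
  (forall j, (j < 5)%N -> \dim (Fl j) = j.+1) /\
  (forall j, (j < 4)%N -> (Fl j <= Fl j.+1)%VS).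

(* Monomials x_i x_j (i <= j) are pairs (i, j).  For a basis of linear forms
   x_0..x_5 (the dual basis of the columns e_0..e_5 of an invertible g), the
   form q_A in the coordinates x is y |-> y^T (g^T A g) y; its coefficient
   on the monomial x_i x_j is the following. *)
Definition mcoef (m : 'I_6 * 'I_6) (B : mat) : F :=
  if m.1 == m.2 then B m.1 m.1 else B m.1 m.2 + B m.2 m.1.

Definition mweight (a : 'I_6 -> int) (m : 'I_6 * 'I_6) : int := a m.1 + a m.2.

(* The Pluecker coordinate x_{i1}x_{j1} /\ x_{i2}x_{j2} /\ x_{i3}x_{j3}
   (monomials m 0, m 1, m 2) does not vanish on L: the 3x3 minor of the
   coefficient matrix of (a basis of) L on these monomials is nonzero;
   equivalently some three elements of L give a nonzero minor. *)
Definition pluecker_nonzero (L : {vspace mat}) (g : mat)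
    (m : 'I_3 -> 'I_6 * 'I_6) : Prop :=
  exists Q : 'I_3 -> mat, (forall k, Q k \in L) /\
    \det (\matrix_(k, l) mcoef (m l) (g^T *m Q k *m g)) != 0.

(* L is stable w.r.t. the 1-PS acting diagonally with weights a on the basis
   x_0..x_5 of linear forms determined by g *)
Definition stable_wrt (L : {vspace mat}) (g : mat) (a : 'I_6 -> int) : Prop :=
  exists m : 'I_3 -> 'I_6 * 'I_6,
    (forall l, ((m l).1 <= (m l).2)%N) /\ injective m /\
    pluecker_nonzero L g m /\ 0 < \sum_(l < 3) mweight a (m l).

Definition not_stable_type (L : {vspace mat}) (a : 'I_6 -> int) : Prop :=
  exists g : mat, g \in unitmx /\ ~ stable_wrt L g a.

End Defs.

Definition numtype (s : seq int) : 'I_6 -> int := fun i => nth 0 s i.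
Definition rho1 := numtype [:: 1; 1; 1; 1; 1; -5].
Definition rho2 := numtype [:: 1; 1; 1; 1; -2; -2].
Definition rho3 := numtype [:: 1; 1; 1; -1; -1; -1].
Definition rho4 := numtype [:: 2; 2; -1; -1; -1; -1].
Definition rho5 := numtype [:: 5; -1; -1; -1; -1; -1].

(* Main.v *)
Require Import Defs.
From HB Require Import structures.
From mathcomp Require Import all_boot all_order all_algebra.
From mathcomp Require Import reals complex.
From Stdlib Require Import Classical_Prop.
From mathcomp Require Import ring zify.
Import Order.TTheory GRing.Theory Num.Theory.
Local Open Scope ring_scope.
Set Implicit Arguments. Unset Strict Implicit. Unset Printing Implicit Defensive.

Local Notation mon := ('I_6 * 'I_6)%type.

Section Gen.
Variable F : fieldType.
Local Notation mat := 'M[F]_6.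
Local Notation vec := 'cV[F]_6.

Definition coef (g : mat) (m : mon) (A : mat) : F := mcoef m (g^T *m A *m g).

Lemma coefL g m a (A B : mat) : coef g m (a *: A + B) = a * coef g m A + coef g m B.
Proof.
rewrite /coef /mcoef mulmxDr mulmxDl -scalemxAr -scalemxAl.
by case: ifP => _; rewrite !mxE // mulrDr !addrA; congr (_ + _); rewrite -!addrA [X in _ + X]addrC.
Qed.

Lemma coef0 g m : coef g m 0 = 0.
Proof. by rewrite /coef /mcoef mulmx0 mul0mx; case: ifP => _; rewrite !mxE ?addr0. Qed.

Lemma coefZ g m a (A : mat) : coef g m (a *: A) = a * coef g m A.
Proof. by rewrite -[a *: A]addr0 coefL coef0 addr0. Qed.

Lemma coefD g m (A B : mat) : coef g m (A + B) = coef g m A + coef g m B.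
Proof. by rewrite -[A]scale1r coefL mul1r scale1r. Qed.

Lemma coef_sum g m n (x : 'I_n -> F) (X : 'I_n -> mat) :
  coef g m (\sum_(i < n) x i *: X i) = \sum_(i < n) x i * coef g m (X i).
Proof.
elim/big_rec2: _ => [|i y A _ IH]; first exact: coef0.
by rewrite coefL IH.
Qed.

Lemma coef_span g m (X : seq mat) A :
  (forall Q, Q \in X -> coef g m Q = 0) -> A \in <<X>>%VS -> coef g m A = 0.
Proof.
move=> H /(@coord_span _ _ _ (in_tuple X)) ->.
rewrite coef_sum big1 // => i _; rewrite H ?mulr0 //.
by apply: mem_nth.
Qed.


Lemma ker_exists g (U : {vspace mat}) n (ms : 'I_n -> mon) :
  (n < \dim U)%N -> exists2 A, A \in U & A != 0 /\ forall i, coef g (ms i) A = 0.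
Proof.
move=> ltn.
set b := vbasis U.
pose N : 'M[F]_(\dim U, n) := \matrix_(k, i) coef g (ms i) b`_k.
set K := kermx N.
have rK : (0 < \rank K)%N.
  by rewrite /K mxrank_ker subn_gt0 (leq_ltn_trans (rank_leq_col N)).
case: (boolP [exists i, row i K != 0]) => [/existsP[i Hi]|/existsPn H]; last first.
  have K0 : K = 0.
    apply/row_matrixP => i; rewrite row0; by move/negPn/eqP: (H i).
  by move: rK; rewrite K0 mxrank0.
set x := row i K.
have xN : x *m N = 0 by rewrite /x -row_mul mulmx_ker row0.
exists (\sum_(k < \dim U) x 0 k *: b`_k).
  apply: memv_suml => k _; apply: memvZ; apply: vbasis_mem; by apply: mem_nth; rewrite size_tuple.
split.
  apply/negP => /eqP S0; move: Hi; rewrite -/x => /negP; apply; apply/eqP.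
  apply/rowP => k; rewrite mxE.
  have fb : free b := basis_free (vbasisP U).
  have := (freeP fb (fun k => x 0 k) S0 k). simpl. by rewrite /x mxE => ->; rewrite mxE.
move=> j; rewrite coef_sum.
have := congr1 (fun M : 'M[F]_(1,n) => M 0 j) xN; rewrite !mxE => Hs.
rewrite -[RHS]Hs; apply: eq_bigr => k _; congr (_ * _); by rewrite /N mxE.
Qed.


Lemma ex_min (T : Type) (P : T -> Prop) (r : T -> nat) :
  (exists x, P x) -> exists x, P x /\ forall y, P y -> (r x <= r y)%N.
Proof.
move=> [x Px].
suff H : forall n, forall x, (r x <= n)%N -> P x -> exists x, P x /\ forall y, P y -> (r x <= r y)%N.
  exact: (H (r x) x).
elim=> [|n IH] z hz Pz.
  exists z; split=> // y _; move: hz; rewrite leqn0 => /eqP ->; exact: leq0n.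
case: (Classical_Prop.classic (exists y, P y /\ (r y <= n)%N)) => [[y [Py hy]]|Hn].
  exact: (IH y).
exists z; split=> // y Py; rewrite leqNgt; apply/negP => hlt; apply: Hn; exists y; split=> //.
by rewrite -ltnS (leq_trans hlt hz).
Qed.

Lemma coef_nz g A : g \in unitmx -> A^T = A -> A != 0 -> (2%:R : F) != 0 ->
  exists m : mon, (m.1 <= m.2)%N /\ coef g m A != 0.
Proof.
move=> gu As Anz two.
set B := g^T *m A *m g.
have Bnz : B != 0.
  apply/negP => /eqP B0; move/negP: Anz; apply; apply/eqP.
  have gTu : g^T \in unitmx by rewrite unitmx_tr.
  have -> : A = invmx g^T *m B *m invmx g.
    by rewrite /B !mulmxA mulVmx // mul1mx -mulmxA mulmxV // mulmx1.
  by rewrite B0 mulmx0 mul0mx.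
have Bs : B^T = B by rewrite /B !trmx_mul trmxK As mulmxA.
case: (boolP [exists a, exists b, B a b != 0]) => [/existsP[a /existsP[b hab]]|/existsPn H]; last first.
  case/negP: Bnz; apply/eqP/matrixP => x y; move/existsPn: (H x) => /(_ y)/negPn/eqP ->; by rewrite mxE.
have hba : B b a != 0 by move: hab; rewrite -{1}Bs mxE.
have key : forall a b : 'I_6, (a <= b)%N -> B a b != 0 -> exists m : mon, (m.1 <= m.2)%N /\ coef g m A != 0.
  move=> x y xy hxy; exists (x, y); split=> //; rewrite /coef /mcoef /= -/B.
  case: (x =P y) => [e|_]; first by move: hxy; rewrite -e.
  have -> : B y x = B x y by rewrite -{1}Bs mxE.
  by rewrite -mulr2n -mulr_natl mulf_neq0.
case: (leqP a b) => h; first exact: key h hab.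
exact: key (ltnW h) hba.
Qed.


Definition ordm (m : mon) := (m.1 <= m.2)%N.

Section Piv.
Variables (g : mat) (L : {vspace mat}) (r : mon -> nat).
Hypotheses (gu : g \in unitmx) (dL : \dim L = 3%N)
  (Ls : forall A, A \in L -> A^T = A) (two : (2%:R : F) != 0).

Lemma piv : exists (m0 m1 m2 : mon) (Q0 Q1 Q2 : mat),
  [/\ ordm m0, ordm m1 & ordm m2] /\ [/\ Q0 \in L, Q1 \in L & Q2 \in L] /\
  [/\ coef g m0 Q0 != 0, coef g m1 Q1 != 0 & coef g m2 Q2 != 0] /\
  [/\ coef g m0 Q1 = 0, coef g m0 Q2 = 0 & coef g m1 Q2 = 0] /\
  (forall A, A \in L -> forall m, ordm m -> (r m < r m0)%N -> coef g m A = 0) /\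
  (forall A, A \in L -> coef g m0 A = 0 ->
     forall m, ordm m -> (r m < r m1)%N -> coef g m A = 0) /\
  (forall A, A \in L -> coef g m0 A = 0 -> coef g m1 A = 0 ->
     forall m, ordm m -> (r m < r m2)%N -> coef g m A = 0).
Proof.
have [A0 A0L [A0nz _]] := @ker_exists g L 0 (fun _ => (ord0, ord0)) ltac:(by rewrite dL).
have [m' [om' hm']] := coef_nz gu (Ls A0L) A0nz two.
pose P0 m := ordm m /\ exists A, A \in L /\ coef g m A != 0.
have [m0 [[om0 [Q0 [Q0L Q0nz]]] min0]] : exists x, P0 x /\ forall y, P0 y -> (r x <= r y)%N.
  by apply: ex_min; exists m'; split=> //; exists A0.
have [A1 A1L [A1nz A1m0]] := @ker_exists g L 1 (fun _ => m0) ltac:(by rewrite dL).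
have [m'' [om'' hm'']] := coef_nz gu (Ls A1L) A1nz two.
pose P1 m := ordm m /\ exists A, [/\ A \in L, coef g m0 A = 0 & coef g m A != 0].
have [m1 [[om1 [Q1 [Q1L Q1m0 Q1nz]]] min1]] : exists x, P1 x /\ forall y, P1 y -> (r x <= r y)%N.
  by apply: ex_min; exists m''; split=> //; exists A1; split=> //; exact: (A1m0 ord0).
have [A2 A2L [A2nz A2m]] :=
  @ker_exists g L 2 (fun i => if i == ord0 then m0 else m1) ltac:(by rewrite dL).
have A2m0 : coef g m0 A2 = 0 by exact: (A2m ord0).
have A2m1 : coef g m1 A2 = 0 by exact: (A2m (lift ord0 ord0)).
have [m3 [om3 hm3]] := coef_nz gu (Ls A2L) A2nz two.
pose P2 m := ordm m /\ exists A, [/\ A \in L, coef g m0 A = 0, coef g m1 A = 0 & coef g m A != 0].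
have [m2 [[om2 [Q2 [Q2L Q2m0 Q2m1 Q2nz]]] min2]] : exists x, P2 x /\ forall y, P2 y -> (r x <= r y)%N.
  by apply: ex_min; exists m3; split=> //; exists A2; split.
exists m0, m1, m2, Q0, Q1, Q2.
do 4 (split; first by split).
split.
  move=> A AL m om hm; apply/eqP/negPn/negP => nz.
  by move: (min0 m (conj om (ex_intro _ A (conj AL nz)))); rewrite leqNgt hm.
split.
  move=> A AL h0 m om hm; apply/eqP/negPn/negP => nz.
  have : P1 m by split=> //; exists A.
  by move/min1; rewrite leqNgt hm.
move=> A AL h0 h1 m om hm; apply/eqP/negPn/negP => nz.
have : P2 m by split=> //; exists A.
by move/min2; rewrite leqNgt hm.
Qed.


Definition f3 (T : Type) (a b c : T) (l : 'I_3) : T :=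
  match val l with 0 => a | 1 => b | _ => c end.

Lemma pencil_of (Q1 Q2 : mat) m1 m2 :
  Q1 \in L -> Q2 \in L -> coef g m1 Q1 != 0 -> coef g m1 Q2 = 0 -> coef g m2 Q2 != 0 ->
  is_pencil_in <<[:: Q1; Q2]>>%VS L.
Proof.
move=> Q1L Q2L h1 h12 h2; split.
  have fX : free [tuple Q1; Q2].
    apply/freeP => k; rewrite !big_ord_recl big_ord0 addr0 /= => S.
    have e1 := congr1 (coef g m1) S.
    rewrite coef0 coefD !coefZ h12 mulr0 addr0 in e1.
    have k0 : k ord0 = 0 by apply/eqP; move: e1 => /eqP; rewrite mulf_eq0 (negbTE h1) orbF.
    rewrite k0 scale0r add0r in S.
    have e2 := congr1 (coef g m2) S.
    rewrite coef0 coefZ in e2.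
    move=> i; case: i => [[|[|//]] Hi].
      by rewrite -k0; congr k; apply: val_inj.
    have -> : Ordinal Hi = lift ord0 ord0 by apply: val_inj.
    by apply/eqP; move: e2 => /eqP; rewrite mulf_eq0 (negbTE h2) orbF.
  by move/eqP: fX.
apply/span_subvP => x; rewrite !inE => /orP[] /eqP -> //.
Qed.

Lemma det_f3 (Q0 Q1 Q2 : mat) m0 m1 m2 :
  coef g m0 Q0 != 0 -> coef g m1 Q1 != 0 -> coef g m2 Q2 != 0 ->
  coef g m0 Q1 = 0 -> coef g m0 Q2 = 0 -> coef g m1 Q2 = 0 ->
  \det (\matrix_(k, l) mcoef (f3 m0 m1 m2 l) (g^T *m f3 Q0 Q1 Q2 k *m g)) != 0.
Proof.
move=> h0 h1 h2 e01 e02 e12.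
rewrite -det_tr det_trig; last first.
  apply/is_trig_mxP => i j; rewrite !mxE.
  by case: i => [[|[|[|//]]] ?]; case: j => [[|[|[|//]]] ?] //= _.
rewrite !big_ord_recr big_ord0 /= mul1r !mxE /=.
by rewrite !mulf_neq0.
Qed.

Lemma f3_inj (m0 m1 m2 : mon) : m0 != m1 -> m0 != m2 -> m1 != m2 -> injective (f3 m0 m1 m2).
Proof.
move=> a b c i j.
case: i => [[|[|[|//]]] Hi]; case: j => [[|[|[|//]]] Hj]; rewrite /f3 /= => e;
  try (by apply: val_inj); by move: a b c; rewrite e eqxx.
Qed.

Lemma notstable_piv (a : 'I_6 -> int) :
  (forall m, ordm m -> mweight a m = 10%:Z - (r m)%:Z) -> ~ stable_wrt L g a ->
  exists (m0 m1 m2 : mon) (Q2 : mat) (P : {vspace mat}),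
  [/\ ordm m0, ordm m1 & ordm m2] /\
  [/\ (30 <= r m0 + r m1 + r m2)%N, (r m0 <= r m1)%N & (r m1 <= r m2)%N] /\
  (forall A, A \in L -> forall m, ordm m -> (r m < r m0)%N -> coef g m A = 0) /\
  is_pencil_in P L /\
  (forall A, A \in P -> forall m, ordm m -> (r m < r m1)%N -> coef g m A = 0) /\
  [/\ Q2 \in P, Q2 != 0 & forall m, ordm m -> (r m < r m2)%N -> coef g m Q2 = 0].
Proof.
move=> hw ns.
have [m0 [m1 [m2 [Q0 [Q1 [Q2 [[o0 o1 o2] [[Q0L Q1L Q2L] [[h0 h1 h2]
  [[e01 e02 e12] [V0 [V1 V2]]]]]]]]]]]] := piv.
have r01 : (r m0 <= r m1)%N.
  rewrite leqNgt; apply/negP => lt; by move: h1; rewrite (V0 _ Q1L _ o1 lt) eqxx.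
have r12 : (r m1 <= r m2)%N.
  rewrite leqNgt; apply/negP => lt; by move: h2; rewrite (V1 _ Q2L e02 _ o2 lt) eqxx.
have d01 : m0 != m1 by apply/eqP => e; move: h1; rewrite -e e01 eqxx.
have d02 : m0 != m2 by apply/eqP => e; move: h2; rewrite -e e02 eqxx.
have d12 : m1 != m2 by apply/eqP => e; move: h2; rewrite -e e12 eqxx.
have s30 : (30 <= r m0 + r m1 + r m2)%N.
  rewrite leqNgt; apply/negP => lt; apply: ns.
  exists (f3 m0 m1 m2); split.
    by case=> [[|[|[|//]]] ?].
  split; first exact: f3_inj.
  split.
    exists (f3 Q0 Q1 Q2); split; first by case=> [[|[|[|//]]] ?].
    exact: det_f3.
  rewrite !big_ord_recr big_ord0 /= /f3 /= !hw // add0r.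
  have H : ((r m0)%:Z + (r m1)%:Z + (r m2)%:Z < 30)%R by rewrite -!PoszD ltz_nat.
  have -> : 10%:Z - (r m0)%:Z + (10%:Z - (r m1)%:Z) + (10%:Z - (r m2)%:Z) =
    30 - ((r m0)%:Z + (r m1)%:Z + (r m2)%:Z) by ring.
  by rewrite subr_gt0.
exists m0, m1, m2, Q2, <<[:: Q1; Q2]>>%VS.
split; first by [].
split; first by [].
split; first exact: V0.
split; first exact: (pencil_of Q1L Q2L h1 e12 h2).
split.
  move=> A AP m om hm; apply: (coef_span _ AP) => Q; rewrite !inE => /orP[] /eqP ->.
    exact: V1.
  exact: V1 e02 _ om hm.
split; first by rewrite memv_span // !inE eqxx orbT.
  by apply/eqP => Q20; move: h2; rewrite Q20 coef0 eqxx.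
exact: V2.
Qed.

End Piv.

Section Phi.
Variables (g : mat) (L : {vspace mat}) (m : 'I_3 -> mon) (Q : 'I_3 -> mat).
Hypotheses (dL : \dim L = 3%N) (QL : forall k, Q k \in L)
  (dM : \det (\matrix_(k, l) mcoef (m l) (g^T *m Q k *m g)) != 0).

Let M : 'M[F]_3 := \matrix_(k, l) coef g (m l) (Q k).
Let Mu : M \in unitmx.
Proof. by rewrite unitmxE unitfE. Qed.

Let xM (x : 'rV[F]_3) l : (x *m M) 0 l = coef g (m l) (\sum_(k < 3) x 0 k *: Q k).
Proof. by rewrite coef_sum mxE; apply: eq_bigr => k _; rewrite mxE. Qed.

Let xM0 (x : 'rV[F]_3) : x *m M = 0 -> x = 0.
Proof. by move=> h; rewrite -[x](mulmxK Mu) h mul0mx. Qed.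

Lemma phi0 A : A \in L -> (forall l, coef g (m l) A = 0) -> A = 0.
Proof.
move=> AL hA.
pose X := [tuple Q i | i < 3].
have XQ : forall i : 'I_3, X`_i = Q i by move=> i; rewrite -tnth_nth tnth_mktuple.
have fX : free X.
  apply/freeP => k S.
  have : \row_i k i = 0.
    apply: xM0; apply/rowP => l; rewrite xM mxE.
    have -> : \sum_(i < 3) (\row_i0 k i0) 0 i *: Q i = 0.
      by rewrite -[RHS]S; apply: eq_bigr => i _; rewrite mxE XQ.
    exact: coef0.
  by move/rowP => H i; have := H i; rewrite !mxE.
have XL : (<<X>> <= L)%VS.
  apply/span_subvP => x /mapP [i _ ->]; exact: QL.
have eXL : <<X>>%VS = L.
  apply/eqP; rewrite eqEdim XL /= dL; move/eqP: fX => ->; by rewrite size_tuple.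
have AX : A \in <<X>>%VS by rewrite eXL.
rewrite (coord_span AX).
pose x := \row_i coord X i A.
have x0 : x = 0.
  apply: xM0; apply/rowP => l; rewrite xM mxE -(hA l) [in RHS](coord_span AX).
  by congr (coef _ _ _); apply: eq_bigr => i _; rewrite mxE XQ.
apply: big1 => i _; have := congr1 (fun y : 'rV[F]_3 => y 0 i) x0.
by rewrite !mxE => ->; rewrite scale0r.
Qed.

Lemma phiL l : (forall k, coef g (m l) (Q k) = 0) -> False.
Proof.
move=> h.
have := congr1 (fun N : 'M[F]_3 => N l l) (mulVmx Mu).
rewrite !mxE eqxx big1 => [/eqP|k _]; first by rewrite eq_sym oner_eq0.
by rewrite mxE h mulr0.
Qed.

Lemma phiP (P : {vspace mat}) l0 : is_pencil_in P L ->
  (forall A, A \in P -> forall l, l != l0 -> coef g (m l) A = 0) -> False.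
Proof.
move=> [dP PL] h.
have [A AP [Anz hA]] := @ker_exists g P 1 (fun _ => m l0) ltac:(by rewrite dP).
move/negP: Anz; apply; apply/eqP; apply: phi0; first exact: (subvP PL).
move=> l; case: (eqVneq l l0) => [->|ne]; first exact: (hA ord0).
exact: h.
Qed.

End Phi.

Definition i0 : 'I_3 := @Ordinal 3 0 isT.
Definition i1 : 'I_3 := @Ordinal 3 1 isT.
Definition i2 : 'I_3 := @Ordinal 3 2 isT.

Lemma sum3 (f : 'I_3 -> int) : \sum_(l < 3) f l = f i0 + f i1 + f i2.
Proof.
rewrite !big_ord_recr big_ord0 /= add0r.
by congr (f _ + f _ + f _); apply: val_inj.
Qed.

Lemma not_stable_of (g : mat) (L : {vspace mat}) (r : mon -> nat) (a : 'I_6 -> int) :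
  (forall m, ordm m -> mweight a m = 10%:Z - (r m)%:Z) ->
  (forall m : 'I_3 -> mon, (forall l, ordm (m l)) -> injective m ->
     pluecker_nonzero L g m -> (30 <= r (m i0) + r (m i1) + r (m i2))%N) ->
  ~ stable_wrt L g a.
Proof.
move=> hw h [m [om [mi [pl pos]]]].
have := h m om mi pl.
rewrite sum3 (hw _ (om i0)) (hw _ (om i1)) (hw _ (om i2)) in pos.
have E : 10%:Z - (r (m i0))%:Z + (10%:Z - (r (m i1))%:Z) + (10%:Z - (r (m i2))%:Z) =
    30 - ((r (m i0))%:Z + (r (m i1))%:Z + (r (m i2))%:Z) by ring.
rewrite E subr_gt0 -!PoszD ltz_nat in pos.
by rewrite leqNgt pos.
Qed.

Lemma col_mul n (A : 'M[F]_n) (B : 'M[F]_n) i : col i (A *m B) = A *m col i B.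
Proof. by rewrite !colE mulmxA. Qed.

Lemma Bentry (g A : mat) a b :
  (g^T *m A *m g) a b = ((col a g)^T *m A *m col b g) 0 0.
Proof.
have -> : (g^T *m A *m g) a b = row a (col b (g^T *m A *m g)) 0 0 by rewrite !mxE.
by rewrite col_mul row_mul row_mul tr_col.
Qed.

Lemma qform_col (g A : mat) a : qform A (col a g) = (g^T *m A *m g) a a.
Proof. by rewrite Bentry. Qed.

Lemma qform_add (A : mat) (u w : vec) :
  qform A (u + w) = qform A u + qform A w + (u^T *m A *m w) 0 0 + (w^T *m A *m u) 0 0.
Proof.
have tD : (u + w)^T = u^T + w^T by apply/matrixP => i j; rewrite !mxE.
rewrite /qform tD !mulmxDl !mulmxDr !mxE; ring.
Qed.

Lemma qform_col2 (g A : mat) a b : qform A (col a g + col b g) =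
  (g^T *m A *m g) a a + (g^T *m A *m g) b b + (g^T *m A *m g) a b + (g^T *m A *m g) b a.
Proof. by rewrite qform_add !qform_col !Bentry. Qed.

Lemma sym_col (g A : mat) a :
  g^T *m (A + A^T) *m col a g = col a (g^T *m A *m g + (g^T *m A *m g)^T).
Proof. by rewrite -col_mul !trmx_mul trmxK mulmxDr mulmxDl !mulmxA. Qed.

Lemma mcoef_neq (B : mat) (x y : 'I_6) : (x < y)%N -> mcoef (x, y) B = B x y + B y x.
Proof. by move=> xy; rewrite /mcoef /= ifN //; apply: contraTneq xy => ->; rewrite ltnn. Qed.

Lemma mcoef_eq (B : mat) (x : 'I_6) : mcoef (x, x) B = B x x.
Proof. by rewrite /mcoef /= eqxx. Qed.

Lemma contain_to_coef (g A : mat) (V : {vspace vec}) (j : nat) :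
  quad_contains A V -> (forall c : 'I_6, (c <= j)%N -> col c g \in V) ->
  forall m, ordm m -> (m.2 <= j)%N -> coef g m A = 0.
Proof.
move=> hA hc [a b]; rewrite /ordm /= => ab bj.
have aj := leq_trans ab bj.
rewrite /coef /mcoef /=.
have Baa := hA _ (hc a aj); rewrite qform_col in Baa.
case: (eqVneq a b) => [_|_]; first exact: Baa.
have Bbb := hA _ (hc b bj); rewrite qform_col in Bbb.
have := hA _ (memvD (hc a aj) (hc b bj)).
by rewrite qform_col2 Baa Bbb !add0r.
Qed.

Lemma sing_to_coef (g A : mat) (V : {vspace vec}) (j : nat) :
  (2%:R : F) != 0 -> quad_singular_along A V ->
  (forall c : 'I_6, (c <= j)%N -> col c g \in V) ->
  forall m, ordm m -> (m.1 <= j)%N -> coef g m A = 0.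
Proof.
move=> two hA hc [a b]; rewrite /ordm /= => ab aj.
have h := hA _ (hc a aj).
have := congr1 (mulmx g^T) h; rewrite mulmx0 mulmxA sym_col => /colP H.
rewrite /coef /mcoef /=.
case: (eqVneq a b) => [_|_] /=.
  have := H a; rewrite !mxE -mulr2n -mulr_natl => /eqP; rewrite mulf_eq0 (negbTE two) /=.
  by move/eqP.
by have := H b; rewrite !mxE addrC.
Qed.

Definition Fl (g : mat) (j : nat) : {vspace vec} :=
  <<[tuple col (inord i) g | i < j.+1]>>%VS.

Lemma Fl_coord g j v : v \in Fl g j ->
  exists c : 'I_j.+1 -> F, v = \sum_(i < j.+1) c i *: col (inord i) g.
Proof.
move=> /coord_span ->; eexists; apply: eq_bigr => i _.
by rewrite -tnth_nth tnth_mktuple.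
Qed.

Lemma qform_sum (A : mat) n (c : 'I_n -> F) (u : 'I_n -> vec) :
  qform A (\sum_(i < n) c i *: u i) =
  \sum_(i < n) \sum_(k < n) c i * c k * ((u i)^T *m A *m u k) 0 0.
Proof.
have tS : (\sum_(i < n) c i *: u i)^T = \sum_(i < n) c i *: (u i)^T.
  apply/matrixP => x y; rewrite !mxE !summxE; apply: eq_bigr => i _; by rewrite !mxE.
rewrite /qform tS !mulmx_suml summxE; apply: eq_bigr => i _.
rewrite mulmx_sumr summxE; apply: eq_bigr => k _.
by rewrite -!scalemxAl -scalemxAr !mxE mulrA.
Qed.

Lemma inord_le (i j : nat) : (j < 6)%N -> (i <= j)%N -> ((@inord 5 i : nat) <= j)%N.
Proof. by move=> j6 ij; rewrite inordK // (leq_ltn_trans ij j6). Qed.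

Lemma coef_to_contain (g A : mat) (j : nat) : (j < 6)%N -> (2%:R : F) != 0 ->
  (forall m, ordm m -> (m.2 <= j)%N -> coef g m A = 0) -> quad_contains A (Fl g j).
Proof.
move=> j6 two h v /Fl_coord [c ->].
rewrite qform_sum.
set B := g^T *m A *m g.
have anti : forall x y : 'I_6, (x <= j)%N -> (y <= j)%N -> B x y = - B y x.
  move=> x y xj yj; apply/eqP; rewrite -addr_eq0; apply/eqP.
  case: (ltngtP x y) => [xy|yx|/val_inj xy].
  - by have := h (x, y) (ltnW xy) yj; rewrite /coef mcoef_neq.
  - by have := h (y, x) (ltnW yx) xj; rewrite /coef mcoef_neq // addrC.
  - by rewrite -xy; have := h (x, x) (leqnn _) xj; rewrite /coef mcoef_eq => ->; rewrite addr0.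
set S := (X in X = 0).
have SB : S = \sum_(i < j.+1) \sum_(k < j.+1) c i * c k * B (inord i) (inord k).
  apply: eq_bigr => i _; apply: eq_bigr => k _; congr (_ * _).
  exact: (esym (Bentry g A (inord i) (inord k))).
have ij : forall i : 'I_j.+1, ((@inord 5 i : nat) <= j)%N.
  by move=> i; apply: inord_le; rewrite // -ltnS.
have SN : S = - S.
  rewrite {1}SB exchange_big /= SB -sumrN; apply: eq_bigr => k _.
  rewrite -sumrN; apply: eq_bigr => i _.
  by rewrite (anti (inord i) (inord k) (ij i) (ij k)) mulrN [c i * c k]mulrC.
apply/eqP; move: SN => /eqP; rewrite -subr_eq0 opprK -mulr2n -mulr_natl mulf_eq0 (negbTE two) /=.
by [].
Qed.

Lemma colsym0 (B : mat) x : (forall y, B y x + B x y = 0) -> col x (B + B^T) = 0.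
Proof. by move=> h; apply/colP => y; rewrite !mxE; exact: h. Qed.

Lemma coef_to_sing (g A : mat) (j : nat) : g \in unitmx -> (j < 6)%N ->
  (forall m, ordm m -> (m.1 <= j)%N -> coef g m A = 0) -> quad_singular_along A (Fl g j).
Proof.
move=> gu j6 h v /Fl_coord [c ->].
rewrite mulmx_sumr big1 // => i _; rewrite -scalemxAr.
suff -> : (A + A^T) *m col (inord i) g = 0 by rewrite scaler0.
set x : 'I_6 := inord i.
have xj : (x <= j)%N by apply: inord_le; rewrite // -ltnS.
have gTu : g^T \in unitmx by rewrite unitmx_tr.
have E : g^T *m ((A + A^T) *m col x g) =
    col x (g^T *m A *m g + (g^T *m A *m g)^T) by rewrite mulmxA sym_col.
rewrite -[_ *m col x g](mulKmx gTu) E.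
suff -> : col x (g^T *m A *m g + (g^T *m A *m g)^T) = 0 by rewrite mulmx0.
apply: colsym0 => y; rewrite /coef in h.
case: (ltngtP x y) => [xy|yx|/val_inj xy].
- by move: (h (x, y) (ltnW xy) xj); rewrite mcoef_neq // => e; rewrite addrC e.
- by move: (h (y, x) (ltnW yx) (leq_trans (ltnW yx) xj)); rewrite mcoef_neq.
- rewrite -xy; move: (h (x, x) (leqnn _) xj); rewrite mcoef_eq => ->.
  by rewrite addr0.
Qed.

Lemma free_cols (g : mat) n (f : 'I_n -> 'I_6) : g \in unitmx -> injective f ->
  free [tuple col (f i) g | i < n].
Proof.
move=> gu fi; apply/freeP => k S i0.
have S' : \sum_i k i *: col (f i) g = 0.
  by rewrite -[RHS]S; apply: eq_bigr => i _; rewrite -tnth_nth tnth_mktuple.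
have := congr1 (fun v : vec => (invmx g *m v) (f i0) 0) S'.
rewrite /= mulmx0 mulmx_sumr summxE mxE (bigD1 i0) //= big1.
  by rewrite -scalemxAr -col_mul mulVmx // !mxE eqxx mulr1 addr0.
move=> i ne; rewrite -scalemxAr -col_mul mulVmx // !mxE.
have -> : (f i0 == f i) = false.
  by apply/negbTE; apply: contra ne => /eqP /fi ->.
by rewrite mulr0.
Qed.

Lemma Fl_flag (g : mat) : g \in unitmx -> complete_flag (Fl g).
Proof.
move=> gu; split.
  move=> j j5; rewrite /Fl.
  have fX := @free_cols g j.+1 (fun i => inord i) gu.
  have inj : injective (fun i : 'I_j.+1 => (inord i : 'I_6)).
    move=> x y e; have := congr1 (@nat_of_ord 6) e; rewrite !inordK; first exact: val_inj.
    - by rewrite (leq_trans (ltn_ord y)) // ltnS ltnW.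
    - by rewrite (leq_trans (ltn_ord x)) // ltnS ltnW.
  by move/eqP: (fX inj); rewrite size_tuple.
move=> j j4; rewrite /Fl; apply: sub_span => x /mapP [i _ ->].
apply/mapP; exists (widen_ord (leqnSn _) i); last by [].
by rewrite mem_enum.
Qed.

Lemma inj_unit (g : mat) : (forall y : vec, g *m y = 0 -> y = 0) -> g \in unitmx.
Proof.
move=> h; rewrite -unitmx_tr -row_free_unit -kermx_eq0; apply/eqP.
apply/row_matrixP => i; rewrite row0.
have e : row i (kermx g^T) *m g^T = 0 by rewrite -row_mul mulmx_ker row0.
have e2 : g *m (row i (kermx g^T))^T = 0.
  by have := congr1 trmx e; rewrite trmx_mul trmxK trmx0.
have e' := h _ e2.
by rewrite -[row i _]trmxK e' trmx0.
Qed.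

Lemma g_of_flag (V : {vspace vec}) (j : nat) : (j < 6)%N -> \dim V = j.+1 ->
  exists g : mat, g \in unitmx /\ forall c : 'I_6, (c <= j)%N -> col c g \in V.
Proof.
move=> j6 dV.
set X := vbasis V ++ vbasis V^C.
have d6 : \dim (fullv : {vspace vec}) = 6%N by rewrite dimvf.
have sX : size X = 6%N.
  by rewrite size_cat !size_tuple dimv_compl d6 dV subnKC.
have fX : free X.
  rewrite cat_free !(basis_free (vbasisP _)) /= !(span_basis (vbasisP _)).
  by apply/directv_addP; rewrite capv_compl.
pose g : mat := \matrix_(i, c) X`_c i 0.
have cg : forall c, col c g = X`_c by move=> c; apply/colP => i; rewrite !mxE.
exists g; split.
  apply: inj_unit => y gy.
  have Xt : size X == 6%N by rewrite sX.
  pose t := Tuple Xt.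
  have ft : free t by [].
  have S : \sum_(i < 6) y i 0 *: t`_i = 0.
    rewrite -[RHS]gy; apply/colP => i; rewrite summxE !mxE; apply: eq_bigr => c _.
    by rewrite -cg !mxE mulrC.
  by apply/colP => i; rewrite (freeP ft _ S i) mxE.
move=> c cj; have cV : (c < \dim V)%N by rewrite dV ltnS.
rewrite cg nth_cat size_tuple cV.
by apply: vbasis_mem; apply: mem_nth; rewrite size_tuple.
Qed.

End Gen.


Section Glue.
Variable F : fieldType.
Hypothesis two : (2%:R : F) != 0.
Local Notation mat := 'M[F]_6.
Local Notation vec := 'cV[F]_6.

Definition rk (a : 'I_6 -> int) (m : mon) : nat := absz (10%:Z - mweight a m).

Lemma fwd (L : {vspace mat}) (a : 'I_6 -> int) :
  is_net L -> (forall m, ordm m -> mweight a m = 10%:Z - (rk a m)%:Z) ->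
  not_stable_type L a ->
  exists g : mat, complete_flag (Fl g) /\ g \in unitmx /\
  exists (m0 m1 m2 : mon) (Q2 : mat) (P : {vspace mat}),
  [/\ ordm m0, ordm m1 & ordm m2] /\
  [/\ (30 <= rk a m0 + rk a m1 + rk a m2)%N, (rk a m0 <= rk a m1)%N & (rk a m1 <= rk a m2)%N] /\
  (forall A, A \in L -> forall m, ordm m -> (rk a m < rk a m0)%N -> coef g m A = 0) /\
  is_pencil_in P L /\
  (forall A, A \in P -> forall m, ordm m -> (rk a m < rk a m1)%N -> coef g m A = 0) /\
  [/\ Q2 \in P, Q2 != 0 & forall m, ordm m -> (rk a m < rk a m2)%N -> coef g m Q2 = 0].
Proof.
move=> [dL Ls] hw [g [gu ns]].
exists g; split; first exact: Fl_flag.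
split=> //.
exact: (@notstable_piv F g L (rk a) gu dL Ls two a hw ns).
Qed.

Lemma bwd (L : {vspace mat}) (a : 'I_6 -> int) (Fl : nat -> {vspace vec}) (j : nat) :
  complete_flag Fl -> (j < 5)%N ->
  (forall m, ordm m -> mweight a m = 10%:Z - (rk a m)%:Z) ->
  (forall g : mat, g \in unitmx -> (forall c : 'I_6, (c <= j)%N -> col c g \in Fl j) ->
     forall m : 'I_3 -> mon, (forall l, ordm (m l)) -> pluecker_nonzero L g m ->
     (30 <= rk a (m i0) + rk a (m i1) + rk a (m i2))%N) ->
  not_stable_type L a.
Proof.
move=> [dims _] j5 hw h.
have [g [gu hc]] := @g_of_flag F (Fl j) j (leq_trans j5 (leqnSn _)) (dims j j5).
exists g; split=> //.
apply: (@not_stable_of F g L (rk a) a hw) => m om mi pl.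
exact: (h g gu hc m om pl).
Qed.

Section U.
Variables (g : mat) (L : {vspace mat}) (m : 'I_3 -> mon) (Q : 'I_3 -> mat).
Hypotheses (dL : \dim L = 3%N) (QL : forall k, Q k \in L)
  (dM : \det (\matrix_(k, l) mcoef (m l) (g^T *m Q k *m g)) != 0)
  (om : forall l, ordm (m l)).

Lemma U1 (S : mon -> bool) A : A \in L -> A != 0 ->
  (forall m', ordm m' -> S m' -> coef g m' A = 0) -> exists l, ~~ S (m l).
Proof.
move=> AL Anz h.
case: (boolP [exists l, ~~ S (m l)]) => [/existsP[l hl]|/existsPn H]; first by exists l.
move/negP: Anz; case; apply/eqP; apply: (phi0 dL QL dM AL) => l.
by apply: h => //; move/negPn: (H l).
Qed.

Lemma U2 (S : mon -> bool) (P : {vspace mat}) : is_pencil_in P L ->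
  (forall A, A \in P -> forall m', ordm m' -> S m' -> coef g m' A = 0) ->
  forall l0, exists l, l != l0 /\ ~~ S (m l).
Proof.
move=> pP h l0.
case: (boolP [exists l, (l != l0) && ~~ S (m l)]) => [/existsP[l /andP[h1 h2]]|/existsPn H].
  by exists l.
exfalso; apply: (phiP dL QL dM pP (l0 := l0)) => A AP l ne.
apply: h => //; move: (H l); by rewrite negb_and ne /= negbK.
Qed.

Lemma U3 (S : mon -> bool) :
  (forall A, A \in L -> forall m', ordm m' -> S m' -> coef g m' A = 0) ->
  forall l, ~~ S (m l).
Proof.
move=> h l; apply/negP => Sl; apply: (@phiL F g m Q dM l) => k.
exact: h.
Qed.

End U.

End Glue.

Lemma I3 (l : 'I_3) : [\/ l = i0, l = i1 | l = i2].
Proof.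
by case: l => [[|[|[|//]]] ?]; [constructor 1|constructor 2|constructor 3]; apply: val_inj.
Qed.

Lemma AR1 (R : 'I_3 -> nat) lo t : (forall l, lo <= R l)%N -> (exists l, t <= R l)%N ->
  (lo + lo + t <= R i0 + R i1 + R i2)%N.
Proof.
move=> h [l hl]; have := h i0; have := h i1; have := h i2.
by case: (I3 l) => -> in hl *; lia.
Qed.

Lemma AR2 (R : 'I_3 -> nat) lo t : (forall l, lo <= R l)%N ->
  (forall l0, exists l, l != l0 /\ t <= R l)%N ->
  (lo + t + t <= R i0 + R i1 + R i2)%N.
Proof.
move=> h h2; have := h i0; have := h i1; have := h i2.
have [l [n0 t0]] := h2 i0; have [l' [n1 t1]] := h2 i1; have [l'' [n2 t2]] := h2 i2.
by case: (I3 l) => e0 in n0 t0 *; case: (I3 l') => e1 in n1 t1 *; case: (I3 l'') => e2 in n2 t2 *;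
  subst; rewrite ?eqxx in n0 n1 n2 *; lia.
Qed.

Lemma AR3 (R : 'I_3 -> nat) lo t1 t2 : (forall l, lo <= R l)%N ->
  (forall l0, exists l, l != l0 /\ t1 <= R l)%N -> (exists l, t2 <= R l)%N ->
  (lo <= t1 <= t2)%N ->
  (lo + t1 + t2 <= R i0 + R i1 + R i2)%N.
Proof.
move=> h h2 [l3 h3] /andP[a1 a2]; have := h i0; have := h i1; have := h i2.
have [l [n0 t0]] := h2 i0; have [l' [n1 t1']] := h2 i1; have [l'' [n2 t2']] := h2 i2.
by case: (I3 l) => e0 in n0 t0 *; case: (I3 l') => e1 in n1 t1' *; case: (I3 l'') => e2 in n2 t2' *;
  case: (I3 l3) => e3 in h3 *; subst; rewrite ?eqxx in n0 n1 n2 *; lia.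
Qed.




Definition chk1 (m : mon) : bool :=
  (m.1 <= m.2)%N ==> [&& mweight rho1 m == 10%:Z - (rk rho1 m)%:Z, (8 <= rk rho1 m)%N,
     (rk rho1 m <= 20)%N, (rk rho1 m < 14)%N ==> (rk rho1 m <= 8)%N &
     ((rk rho1 m < 14)%N == (m.2 <= 4)%N)].

Lemma chk1P m : ordm m -> [/\ mweight rho1 m = 10%:Z - (rk rho1 m)%:Z, (8 <= rk rho1 m)%N,
     (rk rho1 m <= 20)%N, ((rk rho1 m < 14)%N -> (rk rho1 m <= 8)%N) &
     ((rk rho1 m < 14)%N = (m.2 <= 4)%N)].
Proof.
move=> om.
have : chk1 m.
  case: m {om} => a b; case: a => [[|[|[|[|[|[|//]]]]]] ?];
    case: b => [[|[|[|[|[|[|//]]]]]] ?]; vm_compute; reflexivity.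
rewrite /chk1; rewrite /ordm in om; rewrite om /= => /and5P[/eqP -> -> -> /implyP h /eqP e]; split=> //.
Qed.

Section C1.
Variable F : fieldType.
Hypothesis two : (2%:R : F) != 0.

Lemma case1 (L : {vspace 'M[F]_6}) : is_net L ->
  (not_stable_type L rho1 <->
     exists Fl, complete_flag Fl /\
       exists A, [/\ A \in L, A != 0 & quad_contains A (Fl 4%N)]).
Proof.
move=> nL; have [dL Ls] := nL.
have hw : forall m, ordm m -> mweight rho1 m = 10%:Z - (rk rho1 m)%:Z.
  by move=> m /chk1P [].
split.
  move=> ns.
  have [g [fl [gu [m0 [m1 [m2 [Q2 [P [[o0 o1 o2] [[s30 r01 r12] [V0 [[dP PL] [VP [Q2P Q2nz V2]]]]]]]]]]]]]] :=
    fwd two nL hw ns.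
  have [_ _ _ g0 _] := chk1P o0; have [_ _ _ g1 _] := chk1P o1;
  have [_ _ u2 g2 _] := chk1P o2.
  have r2 : (14 <= rk rho1 m2)%N by lia.
  exists (Fl g); split=> //; exists Q2; split=> //; first exact: (subvP PL).
  apply: coef_to_contain => // m om m4; apply: V2 => //.
  have [_ _ _ _ e] := chk1P om; by rewrite (leq_trans _ r2) // e.
move=> [Fl0 [fl [A [AL Anz hA]]]].
apply: (bwd (j := 4) fl) => // g gu hc m om [Q [QL dM]].
have van := contain_to_coef hA hc.
have [l hl] := U1 dL QL dM om AL Anz (S := fun m' : mon => (m'.2 <= 4)%N) van.
apply: (@AR1 (fun l => rk rho1 (m l)) 8 14).
  by move=> l'; have [] := chk1P (om l').
exists l; have [_ _ _ _ e] := chk1P (om l); by rewrite leqNgt e.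
Qed.

End C1.



Definition chk2 (m : mon) : bool :=
  (m.1 <= m.2)%N ==> [&& mweight rho2 m == 10%:Z - (rk rho2 m)%:Z, (8 <= rk rho2 m)%N, (rk rho2 m <= 14)%N,
     (rk rho2 m < 11)%N ==> (rk rho2 m <= 8)%N, (rk rho2 m < 14)%N ==> (rk rho2 m <= 11)%N,
     ((rk rho2 m < 11)%N == (m.2 <= 3)%N) & ((rk rho2 m < 14)%N == (m.1 <= 3)%N)].

Lemma chk2P m : ordm m -> [/\ mweight rho2 m = 10%:Z - (rk rho2 m)%:Z, (8 <= rk rho2 m)%N, (rk rho2 m <= 14)%N,
     ((rk rho2 m < 11)%N -> (rk rho2 m <= 8)%N) &
     [/\ ((rk rho2 m < 14)%N -> (rk rho2 m <= 11)%N),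
     ((rk rho2 m < 11)%N = (m.2 <= 3)%N) & ((rk rho2 m < 14)%N = (m.1 <= 3)%N)]].
Proof.
move=> om.
have : chk2 m.
  case: m {om} => a b; case: a => [[|[|[|[|[|[|//]]]]]] ?];
    case: b => [[|[|[|[|[|[|//]]]]]] ?]; vm_compute; reflexivity.
rewrite /chk2; rewrite /ordm in om; rewrite om implyTb.
case/and5P => /eqP -> -> -> /implyP h1 /and3P[/implyP h2 /eqP e1 /eqP e2].
by split=> //; split.
Qed.
Definition chk3 (m : mon) : bool :=
  (m.1 <= m.2)%N ==> [&& mweight rho3 m == 10%:Z - (rk rho3 m)%:Z, (8 <= rk rho3 m)%N, (rk rho3 m <= 12)%N,
     (rk rho3 m < 10)%N ==> (rk rho3 m <= 8)%N, (rk rho3 m < 12)%N ==> (rk rho3 m <= 10)%N,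
     ((rk rho3 m < 10)%N == (m.2 <= 2)%N) & ((rk rho3 m < 12)%N == (m.1 <= 2)%N)].

Lemma chk3P m : ordm m -> [/\ mweight rho3 m = 10%:Z - (rk rho3 m)%:Z, (8 <= rk rho3 m)%N, (rk rho3 m <= 12)%N,
     ((rk rho3 m < 10)%N -> (rk rho3 m <= 8)%N) &
     [/\ ((rk rho3 m < 12)%N -> (rk rho3 m <= 10)%N),
     ((rk rho3 m < 10)%N = (m.2 <= 2)%N) & ((rk rho3 m < 12)%N = (m.1 <= 2)%N)]].
Proof.
move=> om.
have : chk3 m.
  case: m {om} => a b; case: a => [[|[|[|[|[|[|//]]]]]] ?];
    case: b => [[|[|[|[|[|[|//]]]]]] ?]; vm_compute; reflexivity.
rewrite /chk3; rewrite /ordm in om; rewrite om implyTb.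
case/and5P => /eqP -> -> -> /implyP h1 /and3P[/implyP h2 /eqP e1 /eqP e2].
by split=> //; split.
Qed.
Definition chk4 (m : mon) : bool :=
  (m.1 <= m.2)%N ==> [&& mweight rho4 m == 10%:Z - (rk rho4 m)%:Z, (6 <= rk rho4 m)%N, (rk rho4 m <= 12)%N,
     (rk rho4 m < 9)%N ==> (rk rho4 m <= 6)%N, (rk rho4 m < 12)%N ==> (rk rho4 m <= 9)%N,
     ((rk rho4 m < 9)%N == (m.2 <= 1)%N) & ((rk rho4 m < 12)%N == (m.1 <= 1)%N)].

Lemma chk4P m : ordm m -> [/\ mweight rho4 m = 10%:Z - (rk rho4 m)%:Z, (6 <= rk rho4 m)%N, (rk rho4 m <= 12)%N,
     ((rk rho4 m < 9)%N -> (rk rho4 m <= 6)%N) &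
     [/\ ((rk rho4 m < 12)%N -> (rk rho4 m <= 9)%N),
     ((rk rho4 m < 9)%N = (m.2 <= 1)%N) & ((rk rho4 m < 12)%N = (m.1 <= 1)%N)]].
Proof.
move=> om.
have : chk4 m.
  case: m {om} => a b; case: a => [[|[|[|[|[|[|//]]]]]] ?];
    case: b => [[|[|[|[|[|[|//]]]]]] ?]; vm_compute; reflexivity.
rewrite /chk4; rewrite /ordm in om; rewrite om implyTb.
case/and5P => /eqP -> -> -> /implyP h1 /and3P[/implyP h2 /eqP e1 /eqP e2].
by split=> //; split.
Qed.
Definition chk5 (m : mon) : bool :=
  (m.1 <= m.2)%N ==> [&& mweight rho5 m == 10%:Z - (rk rho5 m)%:Z, (0 <= rk rho5 m)%N, (rk rho5 m <= 12)%N,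
     (rk rho5 m < 6)%N ==> (rk rho5 m <= 0)%N, (rk rho5 m < 12)%N ==> (rk rho5 m <= 6)%N,
     ((rk rho5 m < 6)%N == (m.2 <= 0)%N) & ((rk rho5 m < 12)%N == (m.1 <= 0)%N)].

Lemma chk5P m : ordm m -> [/\ mweight rho5 m = 10%:Z - (rk rho5 m)%:Z, (0 <= rk rho5 m)%N, (rk rho5 m <= 12)%N,
     ((rk rho5 m < 6)%N -> (rk rho5 m <= 0)%N) &
     [/\ ((rk rho5 m < 12)%N -> (rk rho5 m <= 6)%N),
     ((rk rho5 m < 6)%N = (m.2 <= 0)%N) & ((rk rho5 m < 12)%N = (m.1 <= 0)%N)]].
Proof.
move=> om.
have : chk5 m.
  case: m {om} => a b; case: a => [[|[|[|[|[|[|//]]]]]] ?];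
    case: b => [[|[|[|[|[|[|//]]]]]] ?]; vm_compute; reflexivity.
rewrite /chk5; rewrite /ordm in om; rewrite om implyTb.
case/and5P => /eqP -> -> -> /implyP h1 /and3P[/implyP h2 /eqP e1 /eqP e2].
by split=> //; split.
Qed.



Lemma U2R (m : 'I_3 -> mon) (S : mon -> bool) (R : mon -> nat) t :
  (forall l, (R (m l) < t)%N = S (m l)) ->
  (forall l0, exists l, l != l0 /\ ~~ S (m l)) ->
  (forall l0, exists l, l != l0 /\ (t <= R (m l))%N).
Proof. by move=> e h l0; have [l [n s]] := h l0; exists l; rewrite leqNgt e. Qed.

Lemma U1R (m : 'I_3 -> mon) (S : mon -> bool) (R : mon -> nat) t :
  (forall l, (R (m l) < t)%N = S (m l)) ->
  (exists l, ~~ S (m l)) -> (exists l, (t <= R (m l))%N).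
Proof. by move=> e [l s]; exists l; rewrite leqNgt e. Qed.

Lemma U3R (m : 'I_3 -> mon) (S : mon -> bool) (R : mon -> nat) t :
  (forall l, (R (m l) < t)%N = S (m l)) ->
  (forall l, ~~ S (m l)) -> (forall l, (t <= R (m l))%N).
Proof. by move=> e h l; rewrite leqNgt e. Qed.

Section C2.
Variable F : fieldType.
Hypothesis two : (2%:R : F) != 0.

Lemma case2 (L : {vspace 'M[F]_6}) : is_net L ->
  (not_stable_type L rho2 <->
     exists Fl, complete_flag Fl /\
       ((exists P, is_pencil_in P L /\ sys_contains P (Fl 3%N)) \/
        (exists A, [/\ A \in L, A != 0 & quad_singular_along A (Fl 3%N)]))).
Proof.
move=> nL; have [dL Ls] := nL.
have hw : forall m, ordm m -> mweight rho2 m = 10%:Z - (rk rho2 m)%:Z.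
  by move=> m /chk2P [].
split.
  move=> ns.
  have [g [fl [gu [m0 [m1 [m2 [Q2 [P [[o0 o1 o2] [[s30 r01 r12] [V0 [[dP PL] [VP [Q2P Q2nz V2]]]]]]]]]]]]]] :=
    fwd two nL hw ns.
  have [_ _ _ _ [g0 _ _]] := chk2P o0; have [_ _ _ g1 _] := chk2P o1;
  have [_ _ u2 _ [g2 _ _]] := chk2P o2.
  exists (Fl g); split=> //.
  case: (leqP 11 (rk rho2 m1)) => h1.
    left; exists P; split=> // A AP; apply: coef_to_contain => // m om mj.
    apply: (VP _ AP) => //.
    have [_ _ _ _ [_ e _]] := chk2P om; by rewrite (leq_trans _ h1) // e.
  have r2 : (14 <= rk rho2 m2)%N by lia.
  right; exists Q2; split=> //; first exact: (subvP PL).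
  apply: coef_to_sing => // m om mj; apply: V2 => //.
  have [_ _ _ _ [_ _ e]] := chk2P om; by rewrite (leq_trans _ r2) // e.
move=> [Fl0 [fl H]].
apply: (bwd (j := 3) fl) => // g gu hc m om [Q [QL dM]].
case: H => [[P [pP hP]]|[A [AL Anz hA]]].
  have van : forall A, A \in P -> forall m', ordm m' -> (m'.2 <= 3)%N -> coef g m' A = 0.
    by move=> A AP; apply: contain_to_coef (hP A AP) hc.
  have := U2 dL QL dM om (S := fun m' : mon => (m'.2 <= 3)%N) pP van.
  move/(U2R (m := m) (S := fun m' : mon => (m'.2 <= 3)%N) (R := rk rho2) (t := 11)) => h.
  apply: (@AR2 (fun l => rk rho2 (m l)) 8 11).
    by move=> l'; have [] := chk2P (om l').
  apply: h => l; by have [_ _ _ _ [_ e _]] := chk2P (om l).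
have van := sing_to_coef two hA hc.
have := U1 dL QL dM om AL Anz (S := fun m' : mon => (m'.1 <= 3)%N) van.
move/(U1R (m := m) (S := fun m' : mon => (m'.1 <= 3)%N) (R := rk rho2) (t := 14)) => h.
apply: (@AR1 (fun l => rk rho2 (m l)) 8 14).
  by move=> l'; have [] := chk2P (om l').
apply: h => l; by have [_ _ _ _ [_ _ e]] := chk2P (om l).
Qed.

End C2.



Section C3.
Variable F : fieldType.
Hypothesis two : (2%:R : F) != 0.

Lemma case3 (L : {vspace 'M[F]_6}) : is_net L ->
  (not_stable_type L rho3 <->
     exists Fl, complete_flag Fl /\
       (sys_contains L (Fl 2%N) \/
        (exists P, [/\ is_pencil_in P L, sys_contains P (Fl 2%N) &
           exists A, [/\ A \in P, A != 0 & quad_singular_along A (Fl 2%N)]]))).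
Proof.
move=> nL; have [dL Ls] := nL.
have hw : forall m, ordm m -> mweight rho3 m = 10%:Z - (rk rho3 m)%:Z.
  by move=> m /chk3P [].
split.
  move=> ns.
  have [g [fl [gu [m0 [m1 [m2 [Q2 [P [[o0 o1 o2] [[s30 r01 r12] [V0 [[dP PL] [VP [Q2P Q2nz V2]]]]]]]]]]]]]] :=
    fwd two nL hw ns.
  have [_ _ _ g0 _] := chk3P o0; have [_ _ _ g1 _] := chk3P o1;
  have [_ _ u2 _ [g2 _ _]] := chk3P o2.
  exists (Fl g); split=> //.
  case: (leqP 10 (rk rho3 m0)) => h0.
    left => A AL; apply: coef_to_contain => // m om mj.
    apply: (V0 _ AL) => //.
    have [_ _ _ _ [_ e _]] := chk3P om; by rewrite (leq_trans _ h0) // e.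
  have h1 : (10 <= rk rho3 m1)%N by lia.
  have h2 : (12 <= rk rho3 m2)%N by lia.
  right; exists P; split=> //.
    move=> A AP; apply: coef_to_contain => // m om mj; apply: (VP _ AP) => //.
    have [_ _ _ _ [_ e _]] := chk3P om; by rewrite (leq_trans _ h1) // e.
  exists Q2; split=> //.
  apply: coef_to_sing => // m om mj; apply: V2 => //.
  have [_ _ _ _ [_ _ e]] := chk3P om; by rewrite (leq_trans _ h2) // e.
move=> [Fl0 [fl H]].
apply: (bwd (j := 2) fl) => // g gu hc m om [Q [QL dM]].
case: H => [hL|[P [pP hP [A [AP Anz hA]]]]].
  have van : forall A, A \in L -> forall m', ordm m' -> (m'.2 <= 2)%N -> coef g m' A = 0.
    by move=> A AL; apply: contain_to_coef (hL A AL) hc.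
  have := U3 QL dM om (S := fun m' : mon => (m'.2 <= 2)%N) van.
  move/(U3R (m := m) (S := fun m' : mon => (m'.2 <= 2)%N) (R := rk rho3) (t := 10)) => h.
  have h' : forall l, (10 <= rk rho3 (m l))%N.
    by apply: h => l; have [_ _ _ _ [_ e _]] := chk3P (om l).
  by have := h' i0; have := h' i1; have := h' i2; lia.
have van : forall A, A \in P -> forall m', ordm m' -> (m'.2 <= 2)%N -> coef g m' A = 0.
  by move=> B BP; apply: contain_to_coef (hP B BP) hc.
have := U2 dL QL dM om (S := fun m' : mon => (m'.2 <= 2)%N) pP van.
move/(U2R (m := m) (S := fun m' : mon => (m'.2 <= 2)%N) (R := rk rho3) (t := 10)) => hb.
have vanA := sing_to_coef two hA hc.
have AL : A \in L by case: pP => _ PL; exact: (subvP PL).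
have := U1 dL QL dM om AL Anz (S := fun m' : mon => (m'.1 <= 2)%N) vanA.
move/(U1R (m := m) (S := fun m' : mon => (m'.1 <= 2)%N) (R := rk rho3) (t := 12)) => hc'.
apply: (@AR3 (fun l => rk rho3 (m l)) 8 10 12) => //.
- by move=> l'; have [] := chk3P (om l').
- apply: hb => l; by have [_ _ _ _ [_ e _]] := chk3P (om l).
- apply: hc' => l; by have [_ _ _ _ [_ _ e]] := chk3P (om l).
Qed.

End C3.



Section C4.
Variable F : fieldType.
Hypothesis two : (2%:R : F) != 0.

Lemma case4 (L : {vspace 'M[F]_6}) : is_net L ->
  (not_stable_type L rho4 <->
     exists Fl, complete_flag Fl /\
       ((sys_contains L (Fl 1%N) /\
           exists A, [/\ A \in L, A != 0 & quad_singular_along A (Fl 1%N)]) \/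
        (exists P, is_pencil_in P L /\ sys_singular_along P (Fl 1%N)))).
Proof.
move=> nL; have [dL Ls] := nL.
have hw : forall m, ordm m -> mweight rho4 m = 10%:Z - (rk rho4 m)%:Z.
  by move=> m /chk4P [].
split.
  move=> ns.
  have [g [fl [gu [m0 [m1 [m2 [Q2 [P [[o0 o1 o2] [[s30 r01 r12] [V0 [[dP PL] [VP [Q2P Q2nz V2]]]]]]]]]]]]]] :=
    fwd two nL hw ns.
  have [_ _ _ g0 _] := chk4P o0; have [_ _ _ _ [g1 _ _]] := chk4P o1;
  have [_ _ u2 _ [g2 _ _]] := chk4P o2.
  exists (Fl g); split=> //.
  case: (leqP 12 (rk rho4 m1)) => h1.
    right; exists P; split=> // A AP; apply: coef_to_sing => // m om mj.
    apply: (VP _ AP) => //.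
    have [_ _ _ _ [_ _ e]] := chk4P om; by rewrite (leq_trans _ h1) // e.
  have h0 : (9 <= rk rho4 m0)%N by lia.
  have h2 : (12 <= rk rho4 m2)%N by lia.
  left; split.
    move=> A AL; apply: coef_to_contain => // m om mj; apply: (V0 _ AL) => //.
    have [_ _ _ _ [_ e _]] := chk4P om; by rewrite (leq_trans _ h0) // e.
  exists Q2; split=> //; first exact: (subvP PL).
  apply: coef_to_sing => // m om mj; apply: V2 => //.
  have [_ _ _ _ [_ _ e]] := chk4P om; by rewrite (leq_trans _ h2) // e.
move=> [Fl0 [fl H]].
apply: (bwd (j := 1) fl) => // g gu hc m om [Q [QL dM]].
case: H => [[hL [A [AL Anz hA]]]|[P [pP hP]]].
  have van : forall A, A \in L -> forall m', ordm m' -> (m'.2 <= 1)%N -> coef g m' A = 0.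
    by move=> B BL; apply: contain_to_coef (hL B BL) hc.
  have := U3 QL dM om (S := fun m' : mon => (m'.2 <= 1)%N) van.
  move/(U3R (m := m) (S := fun m' : mon => (m'.2 <= 1)%N) (R := rk rho4) (t := 9)) => h.
  have vanA := sing_to_coef two hA hc.
  have := U1 dL QL dM om AL Anz (S := fun m' : mon => (m'.1 <= 1)%N) vanA.
  move/(U1R (m := m) (S := fun m' : mon => (m'.1 <= 1)%N) (R := rk rho4) (t := 12)) => hc'.
  apply: (@AR1 (fun l => rk rho4 (m l)) 9 12).
    by apply: h => l; have [_ _ _ _ [_ e _]] := chk4P (om l).
  by apply: hc' => l; have [_ _ _ _ [_ _ e]] := chk4P (om l).
have van : forall A, A \in P -> forall m', ordm m' -> (m'.1 <= 1)%N -> coef g m' A = 0.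
  by move=> B BP; apply: sing_to_coef two (hP B BP) hc.
have := U2 dL QL dM om (S := fun m' : mon => (m'.1 <= 1)%N) pP van.
move/(U2R (m := m) (S := fun m' : mon => (m'.1 <= 1)%N) (R := rk rho4) (t := 12)) => hb.
apply: (@AR2 (fun l => rk rho4 (m l)) 6 12).
  by move=> l'; have [] := chk4P (om l').
by apply: hb => l; have [_ _ _ _ [_ _ e]] := chk4P (om l).
Qed.

End C4.



Section C5.
Variable F : fieldType.
Hypothesis two : (2%:R : F) != 0.

Lemma case5 (L : {vspace 'M[F]_6}) : is_net L ->
  (not_stable_type L rho5 <->
     exists Fl, complete_flag Fl /\
       (sys_contains L (Fl 0%N) /\
        exists P, is_pencil_in P L /\ sys_singular_along P (Fl 0%N))).
Proof.
move=> nL; have [dL Ls] := nL.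
have hw : forall m, ordm m -> mweight rho5 m = 10%:Z - (rk rho5 m)%:Z.
  by move=> m /chk5P [].
split.
  move=> ns.
  have [g [fl [gu [m0 [m1 [m2 [Q2 [P [[o0 o1 o2] [[s30 r01 r12] [V0 [[dP PL] [VP [Q2P Q2nz V2]]]]]]]]]]]]]] :=
    fwd two nL hw ns.
  have [_ _ u0 g0 [g0' _ _]] := chk5P o0; have [_ _ u1 _ [g1 _ _]] := chk5P o1;
  have [_ _ u2 _ [g2 _ _]] := chk5P o2.
  have h0 : (6 <= rk rho5 m0)%N by lia.
  have h1 : (12 <= rk rho5 m1)%N by lia.
  exists (Fl g); split=> //; split.
    move=> A AL; apply: coef_to_contain => // m om mj; apply: (V0 _ AL) => //.
    have [_ _ _ _ [_ e _]] := chk5P om; by rewrite (leq_trans _ h0) // e.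
  exists P; split=> // A AP; apply: coef_to_sing => // m om mj.
  apply: (VP _ AP) => //.
  have [_ _ _ _ [_ _ e]] := chk5P om; by rewrite (leq_trans _ h1) // e.
move=> [Fl0 [fl [hL [P [pP hP]]]]].
apply: (bwd (j := 0) fl) => // g gu hc m om [Q [QL dM]].
have van : forall A, A \in L -> forall m', ordm m' -> (m'.2 <= 0)%N -> coef g m' A = 0.
  by move=> B BL; apply: contain_to_coef (hL B BL) hc.
have := U3 QL dM om (S := fun m' : mon => (m'.2 <= 0)%N) van.
move/(U3R (m := m) (S := fun m' : mon => (m'.2 <= 0)%N) (R := rk rho5) (t := 6)) => h.
have van2 : forall A, A \in P -> forall m', ordm m' -> (m'.1 <= 0)%N -> coef g m' A = 0.
  by move=> B BP; apply: sing_to_coef two (hP B BP) hc.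
have := U2 dL QL dM om (S := fun m' : mon => (m'.1 <= 0)%N) pP van2.
move/(U2R (m := m) (S := fun m' : mon => (m'.1 <= 0)%N) (R := rk rho5) (t := 12)) => hb.
apply: (@AR2 (fun l => rk rho5 (m l)) 6 12).
  by apply: h => l; have [_ _ _ _ [_ e _]] := chk5P (om l).
by apply: hb => l; have [_ _ _ _ [_ _ e]] := chk5P (om l).
Qed.

End C5.

Unset Implicit Arguments.

Theorem lemma2p2 (R : realType) (L : {vspace 'M[R[i]]_6}) :
  is_net L ->
  (not_stable_type L rho1 <->
     exists Fl, complete_flag Fl /\
       exists A, [/\ A \in L, A != 0 & quad_contains A (Fl 4%N)])
  /\
  (not_stable_type L rho2 <->
     exists Fl, complete_flag Fl /\
       ((exists P, is_pencil_in P L /\ sys_contains P (Fl 3%N)) \/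
        (exists A, [/\ A \in L, A != 0 & quad_singular_along A (Fl 3%N)])))
  /\
  (not_stable_type L rho3 <->
     exists Fl, complete_flag Fl /\
       (sys_contains L (Fl 2%N) \/
        (exists P, [/\ is_pencil_in P L, sys_contains P (Fl 2%N) &
           exists A, [/\ A \in P, A != 0 & quad_singular_along A (Fl 2%N)]])))
  /\
  (not_stable_type L rho4 <->
     exists Fl, complete_flag Fl /\
       ((sys_contains L (Fl 1%N) /\
           exists A, [/\ A \in L, A != 0 & quad_singular_along A (Fl 1%N)]) \/
        (exists P, is_pencil_in P L /\ sys_singular_along P (Fl 1%N))))
  /\
  (not_stable_type L rho5 <->
     exists Fl, complete_flag Fl /\
       (sys_contains L (Fl 0%N) /\
        exists P, is_pencil_in P L /\ sys_singular_along P (Fl 0%N))).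
Proof.
move=> nL.
have two : (2%:R : R[i]) != 0 by rewrite pnatr_eq0.
split; first exact: case1.
split; first exact: case2.
split; first exact: case3.
split; first exact: case4.
exact: case5.
Qed.
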